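(* For every $\varepsilon>0$ there exists $d_0$ such that for every integer $d\ge d_0$ and every triangle-free graph $G$ on $n$ vertices with maximum degree $d$, \[ |\mathcal I(G)| \;\ge\; \exp\!\left[\left(\tfrac12-\varepsilon\right)\frac{\log^2 d}{d}\,n\right]. \]
   Context: $\mathcal I(G)$ denotes the set of all independent sets of $G$ (including the empty set). Logarithms are natural. *)

(* Defs.v *)
From mathcomp Require Import all_boot.
From Stdlib Require Import Reals.

Set Implicit Arguments.
Unset Strict Implicit.
Unset Printing Implicit Defensive.

Definition simple_graph (T : finType) (e : rel T) : Prop :=
  (forall x y, e x y = e y x) /\ (forall x, ~~ e x x).

Definition triangle_free (T : finType) (e : rel T) : Prop :=
  forall x y z, ~ [&& e x y, e y z & e x z].

Definition deg (T : finType) (e : rel T) (v : T) : nat := #|[set u | e v u]|.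

Definition max_degree_eq (T : finType) (e : rel T) (d : nat) : Prop :=
  (forall v, deg e v <= d) /\ (exists v, deg e v = d).

Definition independent (T : finType) (e : rel T) (S : {set T}) : bool :=
  [forall x in S, forall y in S, ~~ e x y].

Definition num_indep (T : finType) (e : rel T) : nat :=
  #|[set S : {set T} | independent e S]|.

(* Main.v *)
Require Import Defs.
From mathcomp Require Import all_boot all_order all_algebra.
From mathcomp Require Import Rstruct.
From Stdlib Require Import Reals Lra.
From mathcomp Require Import ring lra.
Import Order.TTheory GRing.Theory Num.Theory.
Set Implicit Arguments. Unset Strict Implicit. Unset Printing Implicit Defensive.
Local Open Scope ring_scope.

Lemma sum_inj_le (I J : finType) (P : pred I) (Q : pred J) (f : I -> J) (g : J -> R) :
  (forall j, Q j -> 0 <= g j) ->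
  {in P &, injective f} -> (forall i, P i -> Q (f i)) ->
  \sum_(i | P i) g (f i) <= \sum_(j | Q j) g j.
Proof.
move=> g0 finj PQ.
have -> : \sum_(i | P i) g (f i) = \sum_(i in P) g (f i) by apply: eq_bigl.
rewrite -(big_imset _ finj) /=.
rewrite [X in _ <= X](bigID (mem (f @: P))) /=.
have -> : \sum_(i | Q i && (i \in mem (f @: P))) g i = \sum_(j in f @: P) g j.
  apply: eq_bigl => j /=; apply/idP/idP; first by case/andP.
  move=> H; rewrite H andbT; case/imsetP: H => i Pi ->; exact: PQ.
rewrite lerDl; apply: sumr_ge0 => j /andP [Qj _]; exact: g0.
Qed.
Definition unc (T : finType) (e : rel T) (u : T) (I : {set T}) : bool :=
  [forall w, e u w ==> (w \notin I)].
Definition Pv (T:finType) (e: rel T) (l : R) (v : T) :=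
  \sum_(I : {set T} | independent e I && (v \in I)) l ^+ #|I|.
Definition Uv (T:finType) (e: rel T) (l : R) (v : T) :=
  \sum_(I : {set T} | [&& independent e I, v \notin I & unc e v I]) l ^+ #|I|.

Lemma indepP (T : finType) (e : rel T) (S : {set T}) :
  reflect (forall x y, x \in S -> y \in S -> ~~ e x y) (independent e S).
Proof.
apply: (iffP forallP) => H.
- move=> x y xS yS; move/(_ x): H; rewrite xS /= => /forallP /(_ y); by rewrite yS.
- move=> x; apply/implyP => xS; apply/forallP => y; apply/implyP => yS; exact: H.
Qed.

Lemma uncP (T : finType) (e : rel T) (u : T) (I : {set T}) :
  reflect (forall w, e u w -> w \notin I) (unc e u I).
Proof.
apply: (iffP forallP) => H w; first by move=> euw; move/(_ w): H; rewrite euw.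
by apply/implyP; apply: H.
Qed.

Lemma L1 (T : finType) (e : rel T) l v : simple_graph e -> 0 <= l -> l * Uv e l v <= Pv e l v.
Proof.
move=> [sym irr] l0.
rewrite /Uv /Pv big_distrr /=.
rewrite (eq_bigr (fun I => l ^+ #|v |: I|)); last first.
  by move=> I /and3P[_ vI _]; rewrite cardsU1 vI /= exprS.
apply: (@sum_inj_le _ _ (fun I : {set T} => [&& independent e I, v \notin I & unc e v I]) (fun I : {set T} => independent e I && (v \in I)) (fun I => v |: I) (fun I : {set T} => l ^+ #|I|)).
- move=> I _; exact: exprn_ge0.
- move=> I J; rewrite /in_mem /= => /and3P[_ vI _] /and3P[_ vJ _] H.
  apply/setP => x; move/setP: H => /(_ x); rewrite !in_setU1.
  case: (eqVneq x v) => [-> |] //= _; apply/idP/idP => H1; [case/negP: vI | case/negP: vJ]; exact: H1.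
- move=> I /and3P[/indepP iI vI /uncP uI]; rewrite setU11 andbT.
  apply/indepP => x y; rewrite !in_setU1 => /orP[/eqP-> | xI] /orP[/eqP-> | yI].
  + exact: irr.
  + by apply/negP => /uI; rewrite yI.
  + by rewrite sym; apply/negP => /uI; rewrite xI.
  + exact: iI.
Qed.
Lemma sum_subsets (T : finType) (l : R) (n : nat) (U : {set T}) :
  #|U| = n -> \sum_(A : {set T} | A \subset U) l ^+ #|A| = (1 + l) ^+ n.
Proof.
elim: n U => [|n IH] U cU.
- have -> : U = set0 by apply/eqP; rewrite -cards_eq0 cU.
  rewrite expr0 (big_pred1 set0) ?cards0 ?expr0 // => A; by rewrite subset0.
- have /set0Pn [x xU] : U != set0 by rewrite -cards_eq0 cU.
  have cU' : #|U :\ x| = n by move: cU; rewrite (cardsD1 x) xU add1n => -[].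
  rewrite (bigID (fun A : {set T} => x \in A)) /=.
  have -> : \sum_(A : {set T} | (A \subset U) && (x \notin A)) l ^+ #|A| = (1 + l) ^+ n.
    rewrite -(IH _ cU'); apply: eq_bigl => A; by rewrite subsetD1.
  rewrite (reindex_onto (fun B : {set T} => x |: B) (fun A : {set T} => A :\ x)) /=; last first.
    by move=> A /andP[_ xA]; rewrite setD1K.
  have -> : \sum_(j : {set T} | ((x |: j \subset U) && (x \in x |: j)) && ((x |: j) :\ x == j)) l ^+ #|x |: j|
        = \sum_(j : {set T} | j \subset U :\ x) (l * l ^+ #|j|).
    apply: eq_big => B.
    + rewrite subsetD1 setU11 andbT subUset sub1set xU /=.
      apply/idP/idP.
      * case/andP => -> /eqP H; rewrite andTb; apply/negP => xB.
        by have := setD11 x (x |: B); rewrite H xB.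
      * by case/andP => -> xB; rewrite /= setU1K.
    + move=> /andP[_ /eqP H].
      have xB : x \notin B by apply/negP => xB; have := setD11 x (x |: B); rewrite H xB.
      by rewrite cardsU1 xB add1n exprS.
  by rewrite -big_distrr /= IH // exprS mulrDl mul1r addrC.
Qed.
Definition Yp (T : finType) (e : rel T) (v : T) (I : {set T}) : nat :=
  #|[set u | e v u && unc e u I]|.

Lemma Yp_out (T : finType) (e : rel T) v (I : {set T}) :
  triangle_free e -> Yp e v I = Yp e v (I :\: [set u | e v u]).
Proof.
move=> tf; rewrite /Yp; apply: eq_card => u; rewrite !inE.
case evu: (e v u) => //=.
apply/uncP/uncP => H w euw.
- by rewrite inE negb_and (H w euw) orbT.
- have evw : e v w = false.
    by apply/negP => evw; apply: (tf v u w); rewrite evu euw evw.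
  by have := H w euw; rewrite !inE evw.
Qed.

Lemma L2 (T : finType) (e : rel T) (l : R) (v : T) :
  simple_graph e -> triangle_free e -> 0 <= l ->
  \sum_(I : {set T} | independent e I && (v \notin I)) l ^+ #|I| * (1 + l)^-1 ^+ Yp e v I
   <= Uv e l v.
Proof.
move=> [sym irr] tf l0.
set N := [set u | e v u].
rewrite /Uv (partition_big (fun I : {set T} => I :\: N)
   (fun O : {set T} => [&& independent e O, v \notin O & unc e v O])) /=; last first.
  move=> I /andP[/indepP iI vI]; apply/and3P; split.
  - apply/indepP => x y; rewrite !inE => /andP[_ xI] /andP[_ yI]; exact: iI.
  - by rewrite inE negb_and vI orbT.
  - by apply/uncP => w evw; rewrite !inE evw.
apply: ler_sum => O _.
set y := Yp e v O.
set U := [set u | e v u && unc e u O].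
have cU : #|U| = y by [].
have lp : 0 < 1 + l by apply: (lt_le_trans ltr01); rewrite lerDl.
have E : forall I : {set T}, (independent e I && (v \notin I)) && (I :\: N == O) ->
   l ^+ #|I| * (1 + l)^-1 ^+ Yp e v I = (l ^+ #|O| * (1 + l)^-1 ^+ y) * l ^+ #|I :&: N|.
  move=> I /andP[_ /eqP HO].
  rewrite (Yp_out v I tf) HO -/y -(cardsID N I) HO exprD.
  by rewrite -mulrA mulrC.
rewrite (eq_bigr _ E) -big_distrr /=.
have H2 : \sum_(I : {set T} | (independent e I && (v \notin I)) && (I :\: N == O)) l ^+ #|I :&: N|
   <= \sum_(A : {set T} | A \subset U) l ^+ #|A|.
  apply: (@sum_inj_le _ _ (fun I : {set T} => (independent e I && (v \notin I)) && (I :\: N == O))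
     (fun A : {set T} => A \subset U) (fun I => I :&: N) (fun A : {set T} => l ^+ #|A|)).
  - move=> A _; exact: exprn_ge0.
  - move=> I J; rewrite /in_mem /= => /andP[_ /eqP HI] /andP[_ /eqP HJ] H.
    by rewrite -(setID I N) -(setID J N) H HI HJ.
  - move=> I /andP[/andP[/indepP iI vI] /eqP HO]; apply/subsetP => u.
    rewrite !inE => /andP[uI evu]; rewrite evu /=.
    apply/uncP => w euw; rewrite -HO !inE negb_and; apply/orP; right.
    by apply/negP => wI; move: (iI u w uI wI); rewrite euw.
rewrite (sum_subsets l cU) in H2.
apply: (le_trans (ler_wpM2l _ H2)).
  by apply: mulr_ge0; [exact: exprn_ge0 | apply: exprn_ge0; rewrite invr_ge0 ltW].
by rewrite -mulrA -exprMn mulVf ?expr1n ?mulr1 // gt_eqF.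
Qed.
Lemma tangent (l s : R) (Y : nat) : 0 < l ->
  exp (- s) * (1 + s - Y%:R * ln (1 + l)) <= (1 + l)^-1 ^+ Y.
Proof.
move=> l0.
have lp : (0 < 1 + l)%R by apply/RltP; apply: (lt_le_trans ltr01); rewrite lerDl ltW.
have -> : (1 + l)^-1 = exp (- ln (1 + l)) by rewrite exp_Ropp exp_ln.
rewrite expRX.
have -> : (- ln (1 + l)) *+ Y = - s + (s - Y%:R * ln (1 + l)).
  by rewrite addrA addNr add0r mulNrn mulr_natl.
rewrite -expRD; apply: ler_wpM2l; first by apply/ltW/RltP/exp_pos.
rewrite -addrA; apply/RleP; exact: exp_ineq1_le.
Qed.
Definition Zs (T : finType) (e : rel T) (l : R) :=
  \sum_(I : {set T} | independent e I) l ^+ #|I|.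
Definition Ms (T : finType) (e : rel T) (l : R) :=
  \sum_(I : {set T} | independent e I) #|I|%:R * l ^+ #|I|.

Lemma sum_sub_le (I : finType) (P Q : pred I) (g : I -> R) :
  (forall j, Q j -> 0 <= g j) -> (forall i, P i -> Q i) ->
  \sum_(i | P i) g i <= \sum_(j | Q j) g j.
Proof.
move=> g0 PQ; exact: (@sum_inj_le I I P Q (fun i : I => i) g g0 (fun _ _ _ _ (H : _ = _) => H) PQ).
Qed.

Lemma Pv_ge0 (T : finType) (e : rel T) l v : 0 <= l -> 0 <= Pv e l v.
Proof. move=> l0; apply: sumr_ge0 => I _; exact: exprn_ge0. Qed.

Lemma L3 (T : finType) (e : rel T) (l : R) (v : T) :
  simple_graph e -> triangle_free e -> 0 < l ->
  \sum_(I : {set T} | independent e I) l ^+ #|I| * (1 + l)^-1 ^+ Yp e v I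
   <= Pv e l v + Uv e l v.
Proof.
move=> sg tf l0.
rewrite (bigID (fun I : {set T} => v \in I)) /=.
apply: lerD; last by apply: L2 => //; exact: ltW.
rewrite /Pv; apply: ler_sum => I _.
rewrite -[X in _ <= X]mulr1; apply: ler_wpM2l; first exact: (exprn_ge0 _ (ltW l0)).
have lp : 0 < 1 + l by apply: (lt_le_trans ltr01); rewrite lerDl ltW.
apply: exprn_ile1; first by rewrite invr_ge0 ltW.
by rewrite invf_le1 // lerDl ltW.
Qed.

Lemma L4 (T : finType) (e : rel T) (l : R) (v : T) :
  0 <= l ->
  \sum_(I : {set T} | independent e I) l ^+ #|I| * (Yp e v I)%:R
   <= \sum_(u | e v u) (Pv e l u + Uv e l u).
Proof.
move=> l0.
have E : forall I : {set T}, l ^+ #|I| * (Yp e v I)%:R = \sum_(u | e v u && unc e u I) l ^+ #|I|.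
  move=> I; rewrite mulr_natr /Yp -sumr_const; apply: eq_bigl => u; by rewrite inE.
rewrite (eq_bigr _ (fun I _ => E I)).
rewrite (exchange_big_dep (fun u => e v u)) /=; last by move=> I u _ /andP[].
apply: ler_sum => u evu.
rewrite (bigID (fun I : {set T} => u \in I)) /=; apply: lerD.
- apply: sum_sub_le; first by move=> I _; exact: exprn_ge0.
  by move=> I /andP[/andP[-> _] ->].
- apply: sum_sub_le; first by move=> I _; exact: exprn_ge0.
  by move=> I /andP[/andP[-> /andP[_ ->]] ->].
Qed.

Lemma L5 (T : finType) (e : rel T) (l : R) :
  Ms e l = \sum_v Pv e l v.
Proof.
rewrite /Ms /Pv.
have E : forall I : {set T}, #|I|%:R * l ^+ #|I| = \sum_(v | v \in I) l ^+ #|I|.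
  by move=> I; rewrite sumr_const mulr_natl.
rewrite (eq_bigr _ (fun I _ => E I)).
by rewrite (exchange_big_dep (fun _ => true)).
Qed.

Lemma L6 (T : finType) (e : rel T) (l : R) (d : nat) :
  simple_graph e -> (forall v, leq (deg e v) d) -> 0 <= l ->
  \sum_v \sum_(u | e v u) Pv e l u <= d%:R * \sum_u Pv e l u.
Proof.
move=> [sym _] dd l0.
rewrite (exchange_big_dep (fun _ => true)) //= big_distrr /=.
apply: ler_sum => u _.
have -> : \sum_(i | true && e i u) Pv e l u = Pv e l u *+ deg e u.
  rewrite /deg -sumr_const; apply: eq_bigl => x; by rewrite inE sym.
rewrite -mulr_natl; apply: ler_wpM2r; first exact: Pv_ge0.
by rewrite ler_nat.
Qed.
Lemma sum_constT (T : finType) (c : R) : \sum_(v : T) c = c *+ #|T|.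
Proof. by rewrite -sumr_const; apply: eq_bigl => v; rewrite inE. Qed.

Lemma ln1p_ge0 (l : R) : 0 <= l -> 0 <= ln (1 + l).
Proof.
move=> l0.
case: (eqVneq l 0) => [-> | ln0].
  by rewrite Rplus_0_r ln_1 lexx.
apply/RleP; apply: Rle_trans (Req_le _ _ (esym ln_1)) _.
apply: Rlt_le; apply: ln_increasing; first by apply/RltP; exact: ltr01.
apply/RltP; rewrite ltrDl lt_neqAle l0 andbT eq_sym; exact: ln0.
Qed.

Lemma local_bound (T : finType) (e : rel T) (d : nat) (l s : R) :
  simple_graph e -> triangle_free e -> (forall v, leq (deg e v) d) -> 0 < l ->
  exp (- s) * ((1 + s) * #|T|%:R * Zs e l - ln (1 + l) * ((1 + l^-1) * (d%:R * Ms e l)))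
   <= (1 + l^-1) * Ms e l.
Proof.
move=> sg tf dd l0.
set L := ln (1 + l). set E := exp (- s).
have L0 : 0 <= L by apply: ln1p_ge0; exact: ltW.
have E0 : 0 <= E by apply/ltW/RltP/exp_pos.
have li0 : 0 <= l^-1 by rewrite invr_ge0 ltW.
have Uv_le : forall u, Uv e l u <= l^-1 * Pv e l u.
  move=> u; have H := L1 u sg (ltW l0).
  rewrite -[Uv e l u](mulKf (lt0r_neq0 l0)); exact: ler_wpM2l.
have PU : forall u, Pv e l u + Uv e l u <= (1 + l^-1) * Pv e l u.
  by move=> u; rewrite mulrDl mul1r; apply: lerD.
pose A v := \sum_(I : {set T} | independent e I) l ^+ #|I| * (1 + l)^-1 ^+ Yp e v I.
pose B v := \sum_(I : {set T} | independent e I) l ^+ #|I| * (Yp e v I)%:R.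
have S1 : \sum_v A v <= (1 + l^-1) * Ms e l.
  rewrite L5 big_distrr; apply: ler_sum => v _; apply: le_trans (PU v).
  exact: L3.
have S2 : forall v, E * ((1 + s) * Zs e l - L * B v) <= A v.
  move=> v.
  have H : \sum_(I : {set T} | independent e I) l ^+ #|I| * (E * (1 + s - (Yp e v I)%:R * L)) <= A v.
    apply: ler_sum => I _; apply: ler_wpM2l; first exact: (exprn_ge0 _ (ltW l0)).
    exact: tangent.
  apply: le_trans H; rewrite le_eqVlt; apply/orP; left; apply/eqP.
  have -> : E * ((1 + s) * Zs e l - L * B v) = E * (1 + s) * Zs e l - E * L * B v by ring.
  rewrite /Zs /B !mulr_sumr -sumrB; apply: eq_bigr => I _; ring.
have S3 : \sum_v B v <= (1 + l^-1) * (d%:R * Ms e l).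
  apply: (@le_trans _ _ (\sum_v \sum_(u | e v u) (Pv e l u + Uv e l u))).
    by apply: ler_sum => v _; apply: L4; exact: ltW.
  apply: (@le_trans _ _ (\sum_v \sum_(u | e v u) ((1 + l^-1) * Pv e l u))).
    by apply: ler_sum => v _; apply: ler_sum => u _; exact: PU.
  under eq_bigr do rewrite -big_distrr.
  rewrite -big_distrr /=; apply: ler_wpM2l; first by rewrite addr_ge0.
  rewrite L5; apply: L6 => //; exact: ltW.
apply: le_trans S1; apply: le_trans (ler_sum _ (fun v _ => S2 v)).
have -> : \sum_v E * ((1 + s) * Zs e l - L * B v)
          = E * ((1 + s) * #|T|%:R * Zs e l - L * \sum_v B v).
  rewrite -big_distrr /= sumrB sum_constT -big_distrr /= -mulr_natr; ring.
apply: ler_wpM2l => //; apply: lerB => //; apply: ler_wpM2l => //.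
Qed.
Lemma Zs_ge1 (T : finType) (e : rel T) (l : R) : 0 <= l -> 1 <= Zs e l.
Proof.
move=> l0; rewrite /Zs (bigD1 set0) /=; last by apply/indepP => x y; rewrite inE.
rewrite cards0 expr0 lerDl; apply: sumr_ge0 => I _; exact: exprn_ge0.
Qed.

Lemma Zs_gt0 (T : finType) (e : rel T) (l : R) : 0 <= l -> 0 < Zs e l.
Proof. by move=> l0; apply: (lt_le_trans ltr01); exact: Zs_ge1. Qed.

Lemma Ms_ge0 (T : finType) (e : rel T) (l : R) : 0 <= l -> 0 <= Ms e l.
Proof. by move=> l0; apply: sumr_ge0 => I _; apply: mulr_ge0; [exact: ler0n | exact: exprn_ge0]. Qed.

Lemma Zs_mono (T : finType) (e : rel T) (l m : R) : 0 <= l -> l <= m -> Zs e l <= Zs e m.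
Proof.
move=> l0 lm; apply: ler_sum => I _; apply: lerXn2r => //; rewrite nnegrE //.
exact: le_trans lm.
Qed.

Lemma exp_tan (a b : R) : exp b * (1 + (a - b)) <= exp a.
Proof.
have -> : exp a = exp b * exp (a - b) by rewrite expRD Rplus_minus.
apply: ler_wpM2l; first by apply/ltW/RltP/exp_pos.
apply/RleP; exact: exp_ineq1_le.
Qed.

Lemma jensen (T : finType) (e : rel T) (l m : R) : 0 < l -> l <= m ->
  Zs e l * exp (ln (m / l) * (Ms e l / Zs e l)) <= Zs e m.
Proof.
move=> l0 lm.
have m0 : 0 < m by exact: lt_le_trans lm.
set h := ln (m / l); set mu := Ms e l / Zs e l.
have Z0 : Zs e l != 0 by rewrite gt_eqF // Zs_gt0 // ltW.
have MZ : mu * Zs e l = Ms e l by rewrite /mu divfK.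
have eh : exp h = m / l.
  by rewrite /h exp_ln //; apply/RltP; rewrite divr_gt0.
have E : forall I : {set T}, m ^+ #|I| = l ^+ #|I| * exp (h *+ #|I|).
  move=> I; rewrite -expRX eh -exprMn mulrC divfK // gt_eqF //.
have R1 : Zs e m = \sum_(I : {set T} | independent e I) l ^+ #|I| * exp (h *+ #|I|).
  by rewrite /Zs; apply: eq_bigr => I _; exact: E.
rewrite R1.
change (Zs e l * exp (GRing.mul h mu) <= \sum_(I : {set T} | independent e I) l ^+ #|I| * exp (h *+ #|I|)).
have H : \sum_(I : {set T} | independent e I) l ^+ #|I| * (exp (GRing.mul h mu) * (1 + (h *+ #|I| - h * mu)))
   <= \sum_(I : {set T} | independent e I) l ^+ #|I| * exp (h *+ #|I|).
  apply: ler_sum => I _; apply: ler_wpM2l; first exact: (exprn_ge0 _ (ltW l0)).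
  exact: exp_tan.
apply: le_trans H.
rewrite le_eqVlt; apply/orP; left; apply/eqP.
have R2 : forall I : {set T}, l ^+ #|I| * (exp (GRing.mul h mu) * (1 + (h *+ #|I| - h * mu)))
   = exp (GRing.mul h mu) * (1 - h * mu) * l ^+ #|I| + exp (GRing.mul h mu) * h * (#|I|%:R * l ^+ #|I|).
  by move=> I; rewrite -mulr_natr; ring.
rewrite (eq_bigr _ (fun I _ => R2 I)) big_split /= -!mulr_sumr -/(Zs e l) -/(Ms e l) -MZ.
ring.
Qed.
Lemma key_alg (E L lam n Z M d K s G delta : R) :
 0 < E -> 0 < L -> 0 < lam -> 0 <= n -> 0 < Z -> 0 <= M -> 0 < d -> 0 < K ->
 E * L * d = K -> L <= lam -> lam <= delta -> delta <= 1 -> G <= 1 + s -> 0 <= G ->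
 E * ((1 + s) * n * Z - L * ((1 + lam^-1) * (d * M))) <= (1 + lam^-1) * M ->
 n * ((1 - delta) * (K / (1 + K)) * G) * Z <= d * M.
Proof.
move=> E0 L0 lam0 n0 Z0 M0 d0 K0 EK Llam lamd d1 Gs G0 H.
set c := 1 + lam^-1 in H.
set A := (1 + s) * n * Z in H.
have A0 : G * n * Z <= A.
  rewrite /A; apply: ler_wpM2r; [exact: ltW | apply: ler_wpM2r => //].
have cL : c * L <= 1 + lam.
  rewrite /c mulrDl mul1r [1 + lam]addrC; apply: lerD => //.
  by rewrite mulrC ler_pdivrMr // mul1r.
have H1 : E * A <= c * M * (1 + K).
  have e1 : E * (L * (c * (d * M))) = c * M * K by rewrite -EK; ring.
  move: H; rewrite mulrBr e1 => H; nra.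
have H2 : K * A <= (1 + lam) * (1 + K) * (d * M).
  have e2 : K * A = L * d * (E * A) by rewrite -EK; ring.
  rewrite e2.
  have : L * d * (E * A) <= L * d * (c * M * (1 + K)).
    apply: ler_wpM2l => //; apply: mulr_ge0; exact: ltW.
  move=> H3; apply: le_trans H3 _.
  have : 0 <= (1 + K) * (d * M) by apply: mulr_ge0; [nra | nra].
  nra.
have H4 : (1 - delta) * (1 + lam) <= 1 by nra.
have K1 : 0 < 1 + K by nra.
rewrite -(ler_pM2r K1).
have -> : n * ((1 - delta) * (K / (1 + K)) * G) * Z * (1 + K)
   = (1 - delta) * K * (G * n * Z) by field; rewrite gt_eqF.
have : (1 - delta) * K * (G * n * Z) <= (1 - delta) * (K * A).
  rewrite -mulrA; apply: ler_wpM2l; [nra | apply: ler_wpM2l => //; exact: ltW].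
move=> H5; apply: le_trans H5 _.
have : 0 <= (1 + K) * (d * M) by apply: mulr_ge0; nra.
nra.
Qed.
Lemma exp_le (a b : R) : a <= b -> exp a <= exp b.
Proof.
rewrite le_eqVlt => /orP[/eqP -> // | ab].
by apply/ltW/RltP/exp_increasing/RltP.
Qed.

Lemma ln_le (x y : R) : 0 < x -> x <= y -> ln x <= ln y.
Proof.
move=> x0; rewrite le_eqVlt => /orP[/eqP -> // | xy].
by apply/ltW/RltP/ln_increasing; apply/RltP.
Qed.

Lemma ln_mul (x y : R) : 0 < x -> 0 < y -> ln (x * y) = ln x + ln y.
Proof. by move=> x0 y0; rewrite (ln_mult x y) //; apply/RltP. Qed.

Lemma ln_inv (x : R) : 0 < x -> ln (x^-1) = - ln x.
Proof. by move=> x0; rewrite (ln_Rinv x) //; apply/RltP. Qed.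

Lemma ln_ge (x : R) : 0 < x -> 1 - x^-1 <= ln x.
Proof.
move=> x0.
have H : 1 + (- ln x) <= exp (- ln x) by apply/RleP; exact: exp_ineq1_le.
have E : exp (- ln x) = x^-1 by rewrite exp_Ropp exp_ln //; apply/RltP.
rewrite E in H; lra.
Qed.

Lemma exp_gt0 (a : R) : 0 < exp a.
Proof. by apply/RltP/exp_pos. Qed.

Lemma lnexp (a : R) : ln (exp a) = a.
Proof. exact: ln_exp. Qed.

Lemma expln (x : R) : 0 < x -> exp (ln x) = x.
Proof. by move=> x0; rewrite exp_ln //; apply/RltP. Qed.
Lemma alpha_bound (T : finType) (e : rel T) (d : nat) (K delta t : R) :
  simple_graph e -> triangle_free e -> (forall v, leq (deg e v) d) -> leq 1 d ->
  0 < K -> 0 < delta -> delta <= 1 -> t <= ln delta ->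
  0 <= 1 + ln d%:R + t - delta - ln K ->
  #|T|%:R * ((1 - delta) * (K / (1 + K)) * (1 + ln d%:R + t - delta - ln K)) * Zs e (exp t)
   <= d%:R * Ms e (exp t).
Proof.
move=> sg tf dd dpos K0 delta0 delta1 tdelta G0.
set lam := exp t.
have lam0 : 0 < lam := exp_gt0 t.
have lamd : lam <= delta by rewrite -(expln delta0); exact: exp_le.
have d0 : 0 < (d%:R : R) by rewrite ltr0n.
have lp : 0 < 1 + lam by nra.
set L := ln (1 + lam).
have L0 : 0 < L.
  have := ln_ge lp; rewrite -/L => H.
  have : 0 < 1 - (1 + lam)^-1.
    rewrite subr_gt0 invf_lt1 //; nra.
  move=> H1; exact: lt_le_trans H1 H.
have Llam : L <= lam.
  rewrite -[X in _ <= X]lnexp; apply: ln_le => //.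
  by apply/RleP; exact: exp_ineq1_le.
have lnL : t - delta <= ln L.
  have H1 : lam / (1 + lam) <= L.
    have := ln_ge lp; rewrite -/L => H.
    apply: le_trans H.
    have -> : 1 - (1 + lam)^-1 = lam / (1 + lam) by field; rewrite lt0r_neq0.
    exact: lexx.
  have H2 : ln (lam / (1 + lam)) <= ln L by apply: ln_le => //; exact: divr_gt0.
  have E2 : ln (lam / (1 + lam)) = t - L.
    by rewrite ln_mul ?invr_gt0 // ln_inv // lnexp.
  rewrite E2 in H2; lra.
set s := ln (d%:R * L / K).
have dLK : 0 < d%:R * L / K by apply: divr_gt0 => //; exact: mulr_gt0.
have EK : exp (- s) * L * d%:R = K.
  rewrite exp_Ropp /s expln //.
  have -> : (/ (d%:R * L / K))%R = (d%:R * L / K)^-1 by [].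
  by field; rewrite !gt_eqF.
have Gs : 1 + ln d%:R + t - delta - ln K <= 1 + s.
  have -> : s = ln d%:R + ln L - ln K.
    by rewrite /s ln_mul ?invr_gt0 // ?ln_mul // ?ln_inv //; exact: mulr_gt0.
  lra.
have H := local_bound s sg tf dd lam0.
apply: (key_alg (exp_gt0 _) L0 lam0 (ler0n _ _) (Zs_gt0 _ (ltW lam0)) (Ms_ge0 _ (ltW lam0)) d0 K0 EK Llam lamd delta1 Gs G0 H).
Qed.
Definition Sg (n a h k d : R) := n * a * (h * h) * (k * (k - 1) / 2) / d.
Definition tk (u0 h k : R) := u0 + k * h.

Lemma grid (T : finType) (e : rel T) (d : nat) (K delta u0 h a : R) (m : nat) :
  simple_graph e -> triangle_free e -> (forall v, leq (deg e v) d) -> leq 1 d ->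
  0 < K -> 0 < delta -> delta <= 1 -> 0 <= h -> tk u0 h m%:R <= ln delta ->
  1 + ln d%:R + u0 - delta - ln K = 0 -> 0 <= a -> a <= (1 - delta) * (K / (1 + K)) ->
  forall k, leq k m ->
  exp (Sg #|T|%:R a h k%:R d%:R)
    <= Zs e (exp (tk u0 h k%:R)).
Proof.
move=> sg tf dd d1 K0 delta0 delta1 h0 um Hu0 a0 aa.
set n := #|T|%:R.
have d0 : 0 < (d%:R : R) by rewrite ltr0n.
elim=> [|k IH] km.
  have -> : Sg n a h 0%:R d%:R = 0 by rewrite /Sg; ring.
  rewrite expR0; apply: Zs_ge1; exact/ltW/exp_gt0.
have km' : leq k m by apply: leq_trans km; exact: leqnSn.
have {IH} IH := IH km'.
set lk := exp (tk u0 h k%:R).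
set lk1 := exp (tk u0 h k.+1%:R).
have lk0 : 0 < lk := exp_gt0 _.
have klk : lk <= lk1.
  apply: exp_le; rewrite /tk; apply: lerD => //; apply: ler_wpM2r => //; by rewrite ler_nat.
have J := jensen e lk0 klk.
have Eh : ln (lk1 / lk) = h.
  rewrite /Rdiv /lk1 /lk -exp_Ropp RmultE expRD lnexp RplusE RoppE /tk.
  rewrite -addn1 natrD; ring.
rewrite Eh in J.
have tle : tk u0 h k%:R <= ln delta.
  apply: le_trans um; rewrite /tk; apply: lerD => //; apply: ler_wpM2r => //; by rewrite ler_nat.
have Gk : 1 + ln d%:R + tk u0 h k%:R - delta - ln K = k%:R * h.
  move: Hu0; rewrite /tk; lra.
have AB := alpha_bound sg tf dd d1 K0 delta0 delta1 tle.
rewrite Gk in AB.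
have AB' := AB (mulr_ge0 (ler0n _ _) h0).
rewrite -/lk in AB'.
set q := Ms e lk / Zs e lk in J.
have Z0 : 0 < Zs e lk by apply: Zs_gt0; exact: ltW.
have qd : Ms e lk = q * Zs e lk by rewrite /q divfK // lt0r_neq0.
rewrite qd in AB'.
have kh0 : 0 <= k%:R * h by apply: mulr_ge0 => //; exact: ler0n.
have AB2 : n * (a * (k%:R * h)) * Zs e lk <= d%:R * q * Zs e lk.
  rewrite -[d%:R * q * _]mulrA; apply: (le_trans _ AB').
  apply: ler_wpM2r; first exact: ltW.
  rewrite -!mulrA; apply: ler_wpM2l; first exact: ler0n.
  have -> : (1 - delta) * (K * ((1 + K)^-1 * (k%:R * h))) = (1 - delta) * (K / (1 + K)) * (k%:R * h) by ring.
  by apply: ler_wpM2r.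
have g_le : n * (a * (k%:R * h)) / d%:R <= q.
  rewrite ler_pdivrMr // [q * _]mulrC; by rewrite ler_pM2r // in AB2.
apply: le_trans J.
pose g := n * (a * (k%:R * h)) / d%:R.
have -> : exp (Sg n a h k.+1%:R d%:R) = exp (Sg n a h k%:R d%:R) * exp (h * g).
  rewrite expRD; congr exp; rewrite ?RplusE ?RmultE /Sg /g -addn1 natrD; field; exact: lt0r_neq0.
apply: ler_pM.
- exact/ltW/exp_gt0.
- exact/ltW/exp_gt0.
- exact: IH.
- apply: exp_le; apply: ler_wpM2l => //.
Qed.
Definition Fin (eps : R) (d n : nat) := (1/2 - eps) * (ln d%:R ^+ 2 / d%:R) * n%:R.

Lemma num_indep_Zs (T : finType) (e : rel T) : (num_indep e)%:R = Zs e 1.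
Proof.
rewrite /num_indep /Zs -sumr_const; apply: eq_big => [I|I _]; first by rewrite inE.
by rewrite expr1n.
Qed.

Lemma main_ring (eps : R) : 0 < eps -> eps < 1/2 ->
  exists d0 : nat, forall (d : nat) (T : finType) (e : rel T), leq d0 d ->
   simple_graph e -> triangle_free e -> (forall v, leq (deg e v) d) ->
   exp (Fin eps d #|T|) <= (num_indep e)%:R.
Proof.
move=> e0 e2.
pose delta := eps / 4. pose K := 4 / eps.
pose C := ln K - ln delta + delta - 1.
pose A := 4 / eps.
have A0 : 0 < A by rewrite divr_gt0.
have [m Hm] := INR_unbounded A.
have Hm' : A < m%:R by rewrite -INRE; apply/RltP.
have m0 : 0 < (m%:R : R) by apply: lt_trans Hm'.
pose B := exp (2 * C / eps).
have [n0 Hn0] := INR_unbounded B.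
have Hn0' : B < n0%:R by rewrite -INRE; apply/RltP.
exists n0.+1 => d T e dd sg tf deg.
have d1 : leq 1 d by apply: leq_trans dd.
have dB : B <= d%:R.
  apply: ltW; apply: lt_le_trans Hn0' _; rewrite ler_nat; exact: leq_trans (leqnSn _) dd.
have d0 : 0 < (d%:R : R) by rewrite ltr0n.
pose ld := ln d%:R.
have ldB : 2 * C / eps <= ld.
  rewrite -[X in X <= _]lnexp; apply: ln_le => //; exact: exp_gt0.
have ld0 : 0 <= ld.
  apply: le_trans (ln_le ltr01 _); first by rewrite -[X in _ <= X]/(ln (IZR 1)) ln_1.
  by rewrite ler1n.
pose X := ld - C.
pose h := X / m%:R.
pose u0 := ln K + delta - 1 - ld.
pose a := (1 - delta) * (K / (1 + K)).
have delta0 : 0 < delta by rewrite divr_gt0.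
have delta1 : delta <= 1 by rewrite /delta ler_pdivrMr //; lra.
have K0 : 0 < K by rewrite divr_gt0.
have a0 : 0 <= a.
  apply: mulr_ge0; first by lra.
  apply: ltW; apply: divr_gt0 => //; lra.
have XX : (1 - eps / 2) * ld <= X.
  have : 2 * C <= eps * ld by rewrite -ler_pdivrMl // mulrC.
  rewrite /X; nra.
have X0 : 0 <= X by nra.
have h0 : 0 <= h by rewrite /h divr_ge0 // ltW.
have um : tk u0 h m%:R = ln delta.
  rewrite /tk /h /X /u0 /C; field; exact: lt0r_neq0.
have Hu0 : 1 + ln d%:R + u0 - delta - ln K = 0 by rewrite /u0 /ld; ring.
have um' : tk u0 h m%:R <= ln delta by rewrite um.
have G := grid sg tf deg d1 K0 delta0 delta1 h0 um' Hu0 a0 (lexx a) (leqnn m).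
rewrite {}um expln // in G.
have G2 : Zs e delta <= Zs e 1 := Zs_mono e (ltW delta0) delta1.
rewrite num_indep_Zs; apply: (le_trans _ (le_trans G G2)).
apply: exp_le.
pose r := ((m%:R : R) - 1) / m%:R.
pose n := (#|T|%:R : R).
have n0' : 0 <= n by exact: ler0n.
have -> : Sg #|T|%:R a h m%:R d%:R = n / d%:R * (a * (X * X) * r) / 2.
  rewrite /Sg /h /r /n; field; by rewrite !lt0r_neq0.
have -> : Fin eps d #|T| = n / d%:R * ((1 - 2 * eps) * (ld * ld)) / 2.
  rewrite /Fin /n /ld; field; exact: lt0r_neq0.
have nd : 0 <= n / d%:R by rewrite divr_ge0 // ltW.
rewrite ler_pM2r; last by rewrite invr_gt0.
apply: ler_wpM2l => //.
have Kq : K / (1 + K) = 4 / (eps + 4).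
  rewrite /K; field; apply/andP; split; rewrite lt0r_neq0 //; lra.
have Kb : 1 - eps / 4 <= K / (1 + K).
  rewrite Kq ler_pdivlMr; last by lra.
  nra.
have rb : 1 - eps / 4 <= r.
  have : 1 / m%:R <= eps / 4.
    have em : 4 < m%:R * eps by rewrite -ltr_pdivrMr.
    rewrite ler_pdivrMr //; nra.
  have -> : r = 1 - 1 / m%:R by rewrite /r; field; exact: lt0r_neq0.
  lra.
have ar : 1 - eps <= a * r.
  rewrite /a /delta.
  have h1 : 0 <= 1 - eps / 4 by lra.
  have h2 : (1 - eps / 4) * (1 - eps / 4) <= (1 - eps / 4) * (K / (1 + K)) by apply: ler_wpM2l.
  have h3 : 0 <= (1 - eps / 4) * (K / (1 + K)) by nra.
  have h4 : (1 - eps / 4) * (K / (1 + K)) * (1 - eps / 4) <= (1 - eps / 4) * (K / (1 + K)) * r by apply: ler_wpM2l.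
  nra.
have p0 : 0 <= (1 - eps / 2) * ld by apply: mulr_ge0 => //; lra.
have XX1 : ((1 - eps / 2) * ld) * ((1 - eps / 2) * ld) <= X * X by apply: ler_pM.
have XX2 : (1 - eps) * (ld * ld) <= X * X.
  apply: le_trans XX1; have : 0 <= ld * ld by apply: mulr_ge0.
  nra.
have ar0 : 0 <= 1 - eps by lra.
nra.
Qed.
Lemma small_case (eps : R) (d : nat) (T : finType) (e : rel T) :
  1/2 <= eps -> exp (Fin eps d #|T|) <= (num_indep e)%:R.
Proof.
move=> he.
rewrite num_indep_Zs; apply: le_trans (Zs_ge1 e ler01).
rewrite -expR0; apply: exp_le.
rewrite /Fin; apply: mulr_le0_ge0; last exact: ler0n.
apply: mulr_le0_ge0; first by lra.
apply: mulr_ge0; first by rewrite expr2; exact: mul_ge0_le0_ge0 || apply: sqr_ge0.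
by rewrite invr_ge0 ler0n.
Qed.

Lemma main_std (eps : R) : Rlt 0 eps -> Rlt eps (Rdiv 1 2) ->
  exists d0 : nat, forall (d : nat) (T : finType) (e : rel T), leq d0 d ->
   simple_graph e -> triangle_free e -> (forall v, leq (deg e v) d) ->
   exp (Fin eps d #|T|) <= (num_indep e)%:R.
Proof. move=> /RltP h1 /RltP h2; exact: main_ring. Qed.

Lemma small_std (eps : R) (d : nat) (T : finType) (e : rel T) :
  Rle (Rdiv 1 2) eps -> exp (Fin eps d #|T|) <= (num_indep e)%:R.
Proof. move=> /RleP h; exact: small_case. Qed.

Local Close Scope ring_scope.

Theorem theorem1p2 :
  forall eps : R, (0 < eps)%R ->
  exists d0 : nat,
    forall (d : nat) (T : finType) (e : rel T),
      (d0 <= d)%N ->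
      simple_graph e -> triangle_free e -> max_degree_eq e d ->
      (exp ((1/2 - eps) * ((ln (INR d))^2 / INR d) * INR #|T|)
         <= INR (num_indep e))%R.
Proof.
intros eps Heps.
destruct (Rlt_le_dec eps (1/2)) as [H | H].
- have [d0 Hd0] := main_std Heps H.
  exists d0 => d T e dd sg tf [deg _].
  rewrite !INRE RpowE; apply/RleP; exact: (Hd0 d T e dd sg tf deg).
- exists 0%N => d T e _ sg tf _.
  rewrite !INRE RpowE; apply/RleP; exact: small_std.
Qed.
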